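(* Let $\mathfrak R$ be an iterated graph system satisfying (GR1)–(GR3), with replacement graphs $G_m$. Every path in a replacement graph containing at most two distinct vertices, and every non-collapsing path, is an intersection path. Moreover, if $\theta$ is an intersection path in $G_m$ and $\{\theta_n\}_{n\in\mathbb N}$ is a sequence of paths witnessing this (as in the definition of intersection path), then $\theta_n$ is non-collapsing for all sufficiently large $n\in\mathbb N$. In particular, $\mathfrak R$ is of bounded geometry if and only if \[ \sup_\theta\operatorname{diam}(\theta)<\infty, \] where the supremum is over all non-collapsing paths $\theta$ in all replacement graphs $G_n$, and $\operatorname{diam}(\theta)$ is the diameter of the vertex set of $\theta$ with respect to $d_{G_n}$.
   Context: Graphs: $(V,E)$, $V$ finite non-empty, $E\subseteq V\times V$, $(x,y)\in E\Rightarrow(y,x)\notin E$; $\{x,y\}\in E$ means either orientation. A path is a sequence $[x_1,\dots,x_k]$ ($k\ge1$, repetitions allowed) with $\{x_i,x_{i+1}\}\in E$; its length is $k-1$; $d_G$ is the shortest-path metric. An iterated graph system (IGS) consists of a connected graph $G_1=(S,E)$, a finite set $\mathcal T$ of types, a surjective typing $\mathfrak t:E\to\mathcal T$ and non-empty gluing rules $I_t\subseteq S\times S$. With $W_m=S^m$, $W_\#=\bigcup_{m\ge1} W_m$, $[w]_k=w_1\cdots w_k$ and $|w\wedge v|=\min\{k:[w]_k\neq[v]_k\}$ for distinct words of equal length, the replacement graphs $G_m=(W_m,E_m)$ are defined recursively: $(w,v)\in E_{m+1}$ iff either (1) $[w]_m=[v]_m$ and $(w_{m+1},v_{m+1})\in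 E$ (type $\mathfrak t(w_{m+1},v_{m+1})$), or (2) $([w]_m,[v]_m)\in E_m$ and $(w_{m+1},v_{m+1})\in I_{\mathfrak t([w]_m,[v]_m)}$ (type $\mathfrak t([w]_m,[v]_m)$). (GR1)–(GR3): with $I_{t,+}$, $I_{t,-}$ the first, resp. second, coordinates of $I_t$: (GR1) each $w\in S$ has at most one $v$ with $(w,v)\in I_t$ and at most one $v$ with $(v,w)\in I_t$; (GR2) for each $t$ and $w$, $w$ cannot both have some $v$ with $(w,v)\in I_t$ and an outgoing edge of $G_1$ of type $t$, and cannot both have some $v$ with $(v,w)\in I_t$ and an incoming edge of $G_1$ of type $t$; (GR3) $I_{t,-}\cap I_{t,+}=\emptyset$. For $n\ge k$, $\pi_{n,k}:W_n\to W_k$, $w\mapsto[w]_k$; it maps paths of $G_n$ to paths of $G_k$ by applying it to each vertex and deleting consecutive repetitions. A path $\theta$ in $G_m$ is an intersection path if there are paths $\theta_n$ in $G_n$ for all $n\in\mathbb N$ with $\theta_m=\theta$, $\pi_{n,k}(\theta_n)=\theta_k$ for all $n>k$, and $\lim_{n\to\infty}\operatorname{len}(\theta_n)<\infty$. The fundamental neighbourhood of $w\in W_\#$ is $\mathcal N(w)=\{v\in W_{|w|}:$ there is an intersection path from $w$ to $v\}$; $\mathfrak R$ is of bounded geometry if $\sup_{w\in W_\#}\operatorname{diam}(\mathcal N(w))<\infty$ (diameter in $d_{G_{|w|}}$). For $n>1$, a path $[w^{(1)},\dots,w^{(k)}]$ in $G_n$ is non-collapsing if $|w^{(i)}\wedge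 w^{(i+1)}|<n$ for all $i=1,\dots,k-1$. *)

(* Defs.v *)
From mathcomp Require Import all_boot.
Set Implicit Arguments. Unset Strict Implicit. Unset Printing Implicit Defensive.

(* An iterated graph system is given by
   - a finite vertex type S (the vertex set of G_1) and an edge relation E on S,
   - a finite type T of types, a typing tp (only meaningful on edges of E),
   - gluing rules I t, a relation on S for each type t.
   Words of length m are sequences w : seq S with size w = m; the i-th letter
   w_i is nth _ w (i-1), so [w]_k = take k w. *)

Section IGS.
Variables (S T : finType) (E : rel S) (tp : S -> S -> T) (I : T -> rel S).

Definition is_IGS : Prop :=
  [/\ (exists x : S, True),
      (forall x y, E x y -> ~~ E y x),
      (forall x y, connect (fun a b => E a b || E b a) x y),
      (forall t : T, exists x y, E x y /\ tp x y = t)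
    & (forall t : T, exists x y, I t x y)].

Definition GR1 : Prop :=
  forall t w v v', (I t w v -> I t w v' -> v = v') /\ (I t v w -> I t v' w -> v = v').

Definition GR2 : Prop :=
  forall t w,
    ~ ((exists v, I t w v) /\ (exists u, E w u /\ tp w u = t)) /\
    ~ ((exists v, I t v w) /\ (exists u, E u w /\ tp u w = t)).

Definition GR3 : Prop :=
  forall t x, ~ ((exists y, I t y x) /\ (exists y, I t x y)).

(* edge_type n w v = Some t iff (w,v) is an (oriented) edge of G_{n+1} of type t *)
Fixpoint edge_type (n : nat) (w v : seq S) : option T :=
  match n with
  | 0 => match w, v with
         | [:: a], [:: b] => if E a b then Some (tp a b) else None
         | _, _ => None
         end
  | n'.+1 =>
      match w, v with
      | a :: _, b :: _ =>
        if (size w == n.+1) && (size v == n.+1) then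
          let x := last a w in let y := last b v in
          let w' := take n w in let v' := take n v in
          if (w' == v') && E x y then Some (tp x y)
          else match edge_type n' w' v' with
               | Some t => if I t x y then Some t else None
               | None => None
               end
        else None
      | _, _ => None
      end
  end.

Definition Edge (m : nat) (w v : seq S) : bool :=
  match m with
  | 0 => false
  | m'.+1 => if edge_type m' w v is Some _ then true else false
  end.

Definition adj (m : nat) (w v : seq S) : bool := Edge m w v || Edge m v w.

Definition is_path (m : nat) (p : seq (seq S)) : bool :=
  [&& p != [::], all (fun w => size w == m) p & sorted (adj m) p].

Definition len (p : seq (seq S)) : nat := (size p).-1.

Definition squash (p : seq (seq S)) : seq (seq S) :=
  foldr (fun x acc => match acc with
                      | y :: _ => if x == y then acc else x :: acc
                      | [::] => [:: x]
                      end) [::] p.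

Definition proj (k : nat) (p : seq (seq S)) : seq (seq S) :=
  squash (map (take k) p).

Definition intersection_witness (m : nat) (theta : seq (seq S))
  (thetas : nat -> seq (seq S)) : Prop :=
  [/\ forall n, 0 < n -> is_path n (thetas n),
      thetas m = theta,
      forall n k, 0 < k -> k < n -> proj k (thetas n) = thetas k
    & exists L N, forall n, N <= n -> len (thetas n) = L].

Definition intersection_path (m : nat) (theta : seq (seq S)) : Prop :=
  is_path m theta /\ exists thetas, intersection_witness m theta thetas.

Definition fund_nbhd (w : seq S) (v : seq S) : Prop :=
  size v = size w /\
  exists theta, intersection_path (size w) theta /\
                head [::] theta = w /\ last [::] theta = v.

Definition dist_le (m : nat) (x y : seq S) (k : nat) : Prop :=
  exists p, is_path m p /\ head [::] p = x /\ last [::] p = y /\ len p <= k.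

Definition bounded_geometry : Prop :=
  exists D, forall w, 0 < size w ->
    forall v1 v2, fund_nbhd w v1 -> fund_nbhd w v2 -> dist_le (size w) v1 v2 D.

Definition wedge (w v : seq S) : nat :=
  find (fun k => take k w != take k v) (iota 0 (size w).+1).

Definition non_collapsing (n : nat) (p : seq (seq S)) : bool :=
  [&& 1 < n, is_path n p & sorted (fun w v => wedge w v < n) p].

End IGS.

(* Main.v *)
Require Import Defs.
From mathcomp Require Import all_boot zify.
Set Implicit Arguments. Unset Strict Implicit. Unset Printing Implicit Defensive.

Section Sq.
Variable S : finType.
Notation W := (seq S).

Lemma squash_cons (x : seq S) s : squash (x :: s) =
  match squash s with y :: _ => if x == y then squash s else x :: squash s | [::] => [:: x] end.
Proof. by []. Qed.

Lemma squash_ex (y : W) s : exists t, squash (y :: s) = y :: t.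
Proof.
elim: s y => [|z s IH] y; first by exists [::].
rewrite squash_cons; case: (IH z) => t ->.
case: eqP => [->|_]; by eexists.
Qed.

Lemma squash_cons2 (x y : W) s : squash (x :: y :: s) =
  if x == y then squash (y :: s) else x :: squash (y :: s).
Proof. by rewrite squash_cons; case: (squash_ex y s) => t ->. Qed.

Lemma squash_nil : squash [::] = ([::] : seq W). Proof. by []. Qed.
Lemma squash1 (x : W) : squash [:: x] = [:: x]. Proof. by []. Qed.

Lemma squash_map_squash (f : W -> W) s :
  squash (map f (squash s)) = squash (map f s).
Proof.
elim: s => [|x [|y s] IH] //.
rewrite squash_cons2; case: eqP => [E|ne].
  by subst x; rewrite IH [in RHS]map_cons squash_cons2 eqxx.
case: (squash_ex y s) IH => t E; rewrite E => IH.
rewrite [in LHS]map_cons [in LHS]map_cons squash_cons2.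
have IH' := IH; rewrite map_cons in IH'; rewrite IH'.
by rewrite [in RHS]map_cons [in RHS]map_cons squash_cons2.
Qed.

Lemma squash_id s : sorted (fun x y : W => x != y) s -> squash s = s.
Proof.
elim: s => [|x [|y s] IH] // H; case/andP: H => ne H.
by rewrite squash_cons2 (negbTE ne) IH.
Qed.

Lemma size_squash (s : seq W) : size (squash s) <= size s.
Proof.
elim: s => [|x [|y s] IH] //.
rewrite squash_cons2; case: eqP => _ /=; last by [].
exact: leqW.
Qed.

Lemma size_squash_eq (s : seq W) : size (squash s) = size s -> sorted (fun x y : W => x != y) s.
Proof.
elim: s => [|x [|y s] IH] //.
rewrite squash_cons2; case: eqP => [_ H|ne [] H].
  by have := size_squash (y :: s); rewrite H /= ltnn.
by apply/andP; split; [apply/eqP | exact: IH].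
Qed.

Lemma head_squash (s : seq W) : head [::] (squash s) = head [::] s.
Proof. case: s => [|y s] //; by case: (squash_ex y s) => t ->. Qed.

Lemma last_squash (s : seq W) : last [::] (squash s) = last [::] s.
Proof.
elim: s => [|x [|y s] IH] //.
rewrite squash_cons2; case: eqP => [_|_]; first by rewrite IH.
by case: (squash_ex y s) IH => t E; rewrite E /= => ->.
Qed.

Lemma mem_squash (s : seq W) : {subset squash s <= s}.
Proof.
elim: s => [|x [|y s] IH] //.
rewrite squash_cons2; case: eqP => _ z.
  by move/IH => H; rewrite inE H orbT.
by rewrite inE => /orP[/eqP->|/IH H]; rewrite inE ?eqxx /= ?H ?orbT.
Qed.

Lemma squash_sorted (r : rel W) s : sorted (fun x y => (x == y) || r x y) s -> sorted r (squash s).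
Proof.
elim: s => [|x [|y s] IH] // H; case/andP: H => H1 H2.
rewrite squash_cons2; case: eqP => [_|ne]; first exact: IH.
case: (squash_ex y s) (IH H2) => t E; rewrite E /= => ->; rewrite andbT.
by move: H1; case: eqP.
Qed.

Lemma squash_nonnil (s : seq W) : s != [::] -> squash s != [::].
Proof. case: s => [|y s] // _; by case: (squash_ex y s) => t ->. Qed.

End Sq.

Section G.
Variables (S T : finType) (E : rel S) (tp : S -> S -> T) (I : T -> rel S).
Hypothesis antis : forall x y, E x y -> ~~ E y x.
Notation et := (edge_type E tp I).

Lemma E_irr x : E x x = false.
Proof. by apply/negP => H; have := antis H; rewrite H. Qed.

Lemma et_refl n w : et n w w = None.
Proof.
elim: n w => [|n IH] [|a w] //=.
  by case: w => // ; rewrite E_irr.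
case: ifP => // _; rewrite eqxx E_irr /= IH //.
Qed.

Lemma et_size n w v t : et n w v = Some t -> size w = n.+1 /\ size v = n.+1.
Proof.
case: n => [|n].
  by case: w => [|a [|]]; case: v => [|b [|]].
case: w => [|a w]; case: v => [|b v] //=.
by case: ifP => // /andP[/eqP -> /eqP ->].
Qed.

Lemma et_S n w v d : et n.+1 w v =
  if (size w == n.+2) && (size v == n.+2) then
    if (take n.+1 w == take n.+1 v) && E (last d w) (last d v) then Some (tp (last d w) (last d v))
    else match et n (take n.+1 w) (take n.+1 v) with
         | Some t => if I t (last d w) (last d v) then Some t else None
         | None => None end
  else None.
Proof. by case: w => [|a w]; case: v => [|b v] //=; rewrite andbF. Qed.

Lemma glue n w v t a b : et n w v = Some t -> I t a b ->
  et n.+1 (rcons w a) (rcons v b) = Some t.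
Proof.
move=> H Iab; have [sw sv] := et_size H.
rewrite (et_S _ _ _ a) !size_rcons sw sv !eqxx /=.
rewrite !last_rcons -!cats1 !takel_cat ?sw ?sv // !take_oversize ?sw ?sv //.
case: eqP => [wv|_] /=; first by rewrite wv et_refl in H.
by rewrite H Iab.
Qed.

Lemma et_down j w v t : et j.+1 w v = Some t ->
  (take j.+1 w == take j.+1 v) || (et j (take j.+1 w) (take j.+1 v) != None).
Proof.
case: w => [|d w]; first by [].
rewrite (et_S _ _ _ d); case: ifP => // _.
case: eqP => [->|ne] /=; first by rewrite ?eqxx.
by case: (et j _ _).
Qed.

Lemma et_glued j w v t d : et j.+1 w v = Some t -> take j.+1 w != take j.+1 v ->
  et j (take j.+1 w) (take j.+1 v) = Some t /\ I t (last d w) (last d v).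
Proof.
rewrite (et_S _ _ _ d); case: ifP => // _.
move=> H ne; move: H; rewrite (negbTE ne) /=.
case: (et j _ _) => // t0.
by case: ifP => // Hi [<-].
Qed.


Notation Edge := (Edge E tp I).
Notation adj := (adj E tp I).
Notation is_path := (is_path E tp I).

Lemma adj_irr m w : adj m w w = false.
Proof. by case: m => [|m] //; rewrite /adj /Edge et_refl. Qed.

Lemma adjC m w v : adj m w v = adj m v w.
Proof. by rewrite /adj orbC. Qed.

Lemma adj_size m w v : adj m w v -> size w = m /\ size v = m.
Proof.
case: m => [|m] //; rewrite /adj /Edge.
case/orP; case H: (et m _ _) => [t|] // _; have [] := et_size H => -> -> //.
Qed.

Lemma adj_neq m w v : adj m w v -> w != v.
Proof. by apply: contraTneq => ->; rewrite adj_irr. Qed.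

Lemma adj_step j w v : adj j.+2 w v ->
  (take j.+1 w == take j.+1 v) || adj j.+1 (take j.+1 w) (take j.+1 v).
Proof.
rewrite /adj /Edge; case/orP.
  case H: (et j.+1 w v) => [t|] // _; have := et_down H.
  case/orP => [->//|H2]; apply/orP; right; apply/orP; left.
  by move: H2; case: (et j _ _).
case H: (et j.+1 v w) => [t|] // _; have := et_down H.
rewrite eq_sym; case/orP => [->//|H2]; apply/orP; right; apply/orP; right.
by move: H2; case: (et j _ _).
Qed.

Lemma adj_down n : forall k w v, 0 < k -> k <= n -> adj n w v ->
  (take k w == take k v) || adj k (take k w) (take k v).
Proof.
elim: n => [|n IH] k w v k0 kn H; first by case: k k0 kn.
have [sw sv] := adj_size H.
move: kn; rewrite leq_eqVlt => /orP[/eqP ->|kn].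
  by rewrite !take_oversize ?sw ?sv // H orbT.
case: n IH H sw sv kn => [|j] IH H sw sv kn; first by case: k k0 kn.
rewrite ltnS in kn.
have := adj_step H; case/orP => [/eqP E1|H1].
  by rewrite -(take_takel w kn) -(take_takel v kn) E1 eqxx.
have := IH k _ _ k0 kn H1.
by rewrite !take_takel.
Qed.

Definition proj' k (p : seq (seq S)) := squash (map (take k) p).

Lemma proj_path n k p : 0 < k -> k <= n -> is_path n p -> is_path k (proj k p).
Proof.
move=> k0 kn /and3P[ne al so]; apply/and3P; split.
- by apply: squash_nonnil; case: p ne {al so}.
- apply/allP => x /mem_squash /mapP [y yp ->].
  by rewrite size_takel //; move/allP: al => /(_ y yp) /eqP ->.
- apply: squash_sorted; rewrite sorted_map.
  by apply: sub_sorted so => x y /= H; apply: adj_down H.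
Qed.

Definition ext (c : seq S -> S) k (x : seq S) := x ++ nseq k (c x).

Lemma ext_ip m theta (c : seq S -> S) : 0 < m -> is_path m theta ->
  (forall k, sorted (fun x y => adj (m + k) (ext c k x) (ext c k y)) theta) ->
  intersection_path E tp I m theta.
Proof.
move=> m0 Hp Hk; split => //.
have sz : forall x, x \in theta -> size x = m.
  by case/and3P: Hp => _ /allP al _ x /al /eqP.
have Pn : forall n, m <= n -> is_path n (map (ext c (n - m)) theta).
  move=> n mn; case/and3P: Hp => ne _ _; apply/and3P; split.
  - by case: (theta) ne.
  - apply/allP => y /mapP [x xt ->]; by rewrite size_cat size_nseq sz // subnKC.
  - by rewrite sorted_map; have := Hk (n - m); rewrite subnKC.
exists (fun n => if n < m then proj n theta else map (ext c (n - m)) theta); split.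
- move=> n n0; case: ltnP => nm; last exact: Pn.
  by apply: proj_path Hp => //; apply: ltnW.
- rewrite ltnn subnn; rewrite -[RHS]map_id; apply: eq_map => x.
  by rewrite /ext cats0.
- move=> n k k0 kn; case: (ltnP n m) => nm.
    have km : k < m by apply: ltn_trans nm.
    rewrite km /proj squash_map_squash -map_comp; congr squash.
    by apply: eq_map => x /=; rewrite take_takel // ltnW.
  case: (ltnP k m) => km.
    rewrite /proj -map_comp; congr squash; apply/eq_in_map => x xt /=.
    by rewrite /ext takel_cat // sz // ltnW.
  rewrite /proj -map_comp.
  have -> : map (take k \o ext c (n - m)) theta = map (ext c (k - m)) theta.
    apply/eq_in_map => x xt /=; rewrite /ext take_cat sz // ltnNge km /=.
    by rewrite take_nseq // leq_sub2r // ltnW.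
  apply: squash_id; case/and3P: (Pn k km) => _ _ so.
  by apply: sub_sorted so => x y /adj_neq.
- exists (len theta), m => n mn; rewrite ltnNge mn /= /len size_map //.
Qed.

Lemma ext_rcons (x : seq S) k a : x ++ nseq k.+1 a = rcons (x ++ nseq k a) a.
Proof. by rewrite -cats1 -catA; congr (_ ++ _); elim: k => //= k ->. Qed.

Lemma glue_k j w v t a b : et j w v = Some t -> I t a b ->
  forall k, et (j + k) (w ++ nseq k a) (v ++ nseq k b) = Some t.
Proof.
move=> H Iab; elim => [|k IH]; first by rewrite addn0 !cats0.
by rewrite addnS !ext_rcons; apply: glue.
Qed.

Hypothesis Inon : forall t, exists x y, I t x y.

Lemma pair_ext m w v : adj m w v -> exists a b,
  forall k, adj (m + k) (w ++ nseq k a) (v ++ nseq k b).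
Proof.
case: m => [|j] //; rewrite /adj /Edge; case/orP.
  case H: (et j w v) => [t|] // _; have [a [b Iab]] := Inon t.
  by exists a, b => k; rewrite addSn (glue_k H Iab k).
case H: (et j v w) => [t|] // _; have [a [b Iab]] := Inon t.
by exists b, a => k; rewrite addSn (glue_k H Iab k) orbT.
Qed.

Lemma wedge_take n (x y : seq S) : size x = n -> wedge x y < n -> take n.-1 x != take n.-1 y.
Proof.
move=> sx; rewrite /wedge sx => wl.
have hs : has (fun k => take k x != take k y) (iota 0 n.+1).
  by rewrite has_find size_iota ltnS ltnW.
have := nth_find 0 hs; rewrite nth_iota ?add0n; last by rewrite ltnS ltnW.
apply: contraNN => /eqP E1.
have wl' : find (fun k => take k x != take k y) (iota 0 n.+1) <= n.-1.
  by rewrite -ltnS; case: (n) wl => // n' /=; rewrite ltnS.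
by rewrite -(take_takel x wl') -(take_takel y wl') E1.
Qed.

Lemma sorted_and (r1 r2 : rel (seq S)) s : sorted r1 s -> sorted r2 s ->
  sorted (fun x y => r1 x y && r2 x y) s.
Proof.
elim: s => [|x [|y s] IH] // H1 H2.
case/andP: H1 => a1 b1; case/andP: H2 => a2 b2.
by apply/andP; split; [rewrite a1 a2 | exact: IH].
Qed.

Lemma nc_ip (d : S) n theta : non_collapsing E tp I n theta -> intersection_path E tp I n theta.
Proof.
case/and3P => n1 Hp so.
have n0 : 0 < n by apply: ltnW.
apply: (@ext_ip n theta (fun x => last d x) n0 Hp) => k.
case/and3P: (Hp) => _ al so2.
apply: (sub_in_sorted (P := fun w => size w == n)) al (sorted_and so2 so).
move=> x y /eqP sx /eqP sy /andP[ad wl].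
have ne := wedge_take sx wl.
have [j nj] : exists j, n = j.+2 by case: (n) n1 => [|[|j]] // _; exists j.
move: ne ad; rewrite nj /= => ne ad.
rewrite /adj /Edge in ad *; case/orP: ad.
  case H: (et j.+1 x y) => [t|] // _.
  have [_ Iab] := et_glued d H ne.
  by rewrite addSn /ext; rewrite (glue_k H Iab k).
case H: (et j.+1 y x) => [t|] // _.
rewrite eq_sym in ne; have [_ Iab] := et_glued d H ne.
by rewrite addSn /ext; rewrite (glue_k H Iab k) orbT.
Qed.

Lemma two_ip (d : S) m theta : 0 < m -> is_path m theta -> size (undup theta) <= 2 ->
  intersection_path E tp I m theta.
Proof.
move=> m0 Hp Hu.
case: theta Hp Hu => [|w0 [|v0 rest]] Hp Hu; first by case/and3P: Hp.
  by apply: (@ext_ip m _ (fun _ => d)) => // k.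
have ad0 : adj m w0 v0 by case/and3P: Hp => _ _ /andP[].
have nwv := adj_neq ad0.
have [a [b Hab]] := pair_ext ad0.
have two : forall z, z \in [:: w0, v0 & rest] -> (z == w0) || (z == v0).
  move=> z zt; apply/negPn/negP; rewrite negb_or => /andP[n1 n2].
  have : size [:: w0; v0; z] <= size (undup [:: w0, v0 & rest]).
    apply: uniq_leq_size.
      by rewrite /= !inE negb_or nwv eq_sym n1 eq_sym n2.
    move=> u; rewrite !inE mem_undup => /or3P[] /eqP ->; rewrite ?zt //.
      by rewrite inE eqxx.
    by rewrite !inE eqxx orbT.
  by move=> H; have := leq_trans H Hu.
apply: (@ext_ip m _ (fun z => if z == w0 then a else b)) => // k.
case/and3P: (Hp) => _ _ so.
apply: (sub_in_sorted (P := fun z => z \in [:: w0, v0 & rest])) (allss _) so.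
move=> x y xt yt ad.
case/orP: (two x xt) => /eqP ex; case/orP: (two y yt) => /eqP ey; subst x y.
- by rewrite adj_irr in ad.
- by rewrite /ext eqxx eq_sym (negbTE nwv); apply: Hab.
- by rewrite /ext eqxx eq_sym (negbTE nwv) adjC; apply: Hab.
- by rewrite adj_irr in ad.
Qed.

Lemma take_wedge n (x y : seq S) : size x = n.+1 -> take n x != take n y -> wedge x y < n.+1.
Proof.
move=> sx ne; rewrite /wedge sx ltnNge; apply/negP => H.
have := before_find 0 H; rewrite nth_iota // add0n => /negbT.
by rewrite negbK (negbTE ne).
Qed.

Lemma size_proj_eq k p : size (proj k p) = size p ->
  sorted (fun x y : seq S => take k x != take k y) p.
Proof.
rewrite /proj -(size_map (take k) p) => H; have := size_squash_eq H.
by rewrite sorted_map.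
Qed.

Lemma witness_nc m theta thetas : intersection_witness E tp I m theta thetas ->
  exists N, forall n, N <= n -> non_collapsing E tp I n (thetas n).
Proof.
case=> Hpath _ Hproj [L [N0 HL]]; exists N0.+2 => n Nn.
have [n' nn'] : exists n', n = n'.+1 by case: (n) Nn => // n' _; exists n'.
subst n.
have n'0 : 0 < n' by lia.
have Hn := Hpath _ (ltn0Sn n'); have Hn' := Hpath _ n'0.
apply/and3P; split; [lia | exact: Hn | ].
have E1 := Hproj _ _ n'0 (ltnSn n').
have Es : size (proj n' (thetas n'.+1)) = size (thetas n'.+1).
  rewrite E1; have := HL n'.+1 ltac:(lia).
  have := HL n' ltac:(lia) => <-.
  case/and3P: Hn => + _ _; case/and3P: Hn' => + _ _.
  by rewrite /len; case: (thetas n') => [|? ?] // _; case: (thetas n'.+1) => [|? ?] // _ /= ->.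
have so := size_proj_eq Es.
case/and3P: Hn => _ al _.
apply: (sub_in_sorted (P := fun w => size w == n'.+1)) al so.
by move=> x y /eqP sx _; apply: take_wedge.
Qed.

Lemma head_rev (s : seq (seq S)) x0 : head x0 (rev s) = last x0 s.
Proof. by case/lastP: s => [|s y] //; rewrite rev_rcons last_rcons. Qed.

Lemma last_rev (s : seq (seq S)) x0 : last x0 (rev s) = head x0 s.
Proof. by case: s => [|a s] //; rewrite rev_cons last_rcons. Qed.

Lemma sorted_join (r : rel (seq S)) s1 x s2 : sorted r (rcons s1 x) -> sorted r (x :: s2) ->
  sorted r (s1 ++ x :: s2).
Proof.
case: s1 => [|a s1] //= H1 H2.
by rewrite cat_path /=; move: H1; rewrite rcons_path => /andP[-> ->].
Qed.

Lemma dist_join m w v1 v2 a b : dist_le E tp I m w v1 a -> dist_le E tp I m w v2 b ->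
  dist_le E tp I m v1 v2 (a + b).
Proof.
case=> p1 [P1 [h1 [l1 len1]]]; case=> p2 [P2 [h2 [l2 len2]]].
case/and3P: P1; case: p1 h1 l1 len1 => [|w1 q1] // /= h1 l1 len1 _ al1 so1.
case/and3P: P2; case: p2 h2 l2 len2 => [|w2 q2] // /= h2 l2 len2 _ al2 so2.
subst w1 w2.
exists (rev (w :: q1) ++ q2); split; [|split; [|split]].
- apply/and3P; split.
  + by rewrite rev_cons; case: (rev q1).
  + rewrite all_cat all_rev; apply/andP; split; first by [].
    by case/andP: al2.
  + rewrite rev_cons cat_rcons; apply: sorted_join.
      rewrite -rev_cons rev_sorted; apply: (sub_sorted (e := adj m)) => // x y /=.
      by rewrite adjC.
    exact: so2.
- have := head_rev (w :: q1) [::]; rewrite /= l1.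
  have : rev (w :: q1) != [::] by rewrite rev_cons; case: (rev q1).
  by case: (rev (w :: q1)) => [|z r].
- by rewrite last_cat last_rev.
- rewrite /len size_cat size_rev /= in len1 len2 *.
  lia.
Qed.

Lemma prefix_nbhd (d : S) n theta x : non_collapsing E tp I n theta -> x \in theta ->
  fund_nbhd E tp I (head [::] theta) x.
Proof.
move=> Hnc xt; have Hnc0 := Hnc; case/and3P: Hnc => n1 /and3P[ne al so] sw.
set i := index x theta.
have il : i < size theta by rewrite index_mem.
set pre := take i.+1 theta.
have szt : forall z, z \in theta -> size z = n by move=> z /(allP al) /eqP.
have hin : head [::] theta \in theta by case: (theta) ne => // ? ? _; rewrite mem_head.
have hsz : size (head [::] theta) = n by apply: szt.
split; first by rewrite hsz szt.
exists pre; split; [|split].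
- rewrite hsz; apply: (nc_ip d); apply/and3P; split => //.
  + apply/and3P; split.
    * by rewrite /pre; case: (theta) ne.
    * by apply/allP => z /mem_take /(allP al).
    * exact: take_sorted.
  + exact: take_sorted.
- by rewrite /pre; case: (theta) ne.
- rewrite -nth_last /pre size_takel // nth_take //.
  exact: nth_index.
Qed.

Lemma head_proj k (p : seq (seq S)) : head [::] (proj k p) = take k (head [::] p).
Proof. by rewrite /proj head_squash; case: p. Qed.

Lemma last_proj k (p : seq (seq S)) : last [::] (proj k p) = take k (last [::] p).
Proof. have E0 : take k ([::] : seq S) = [::] by case: k.
by rewrite /proj last_squash -{1}E0 last_map. Qed.

Lemma len_proj k (p : seq (seq S)) : len (proj k p) <= len p.
Proof.
rewrite /len /proj; have := size_squash (map (take k) p); rewrite size_map.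
by move=> H; rewrite -!subn1 leq_sub2r.
Qed.

Lemma fn_dist D w v : (forall n theta, non_collapsing E tp I n theta ->
         forall x y, x \in theta -> y \in theta -> dist_le E tp I n x y D) ->
  0 < size w -> fund_nbhd E tp I w v -> dist_le E tp I (size w) w v D.
Proof.
move=> HD m0 [sv [theta [[Hp [thetas Hw]] [hh hl]]]].
set m := size w in m0 Hp Hw *.
have [N HN] := witness_nc Hw.
set n := maxn N m.+1.
have Hnc := HN n (leq_maxl _ _).
have Hproj : proj m (thetas n) = theta.
  by case: Hw => _ <- Hpr _; apply: Hpr => //; rewrite leq_max ltnSn orbT.
have mn : m <= n by rewrite leq_max leqW ?orbT.
case/and3P: (Hnc) => _ /and3P[ne _ _] _.
have hx : head [::] (thetas n) \in thetas n by case: (thetas n) ne => // ? ? _; rewrite mem_head.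
have lx : last [::] (thetas n) \in thetas n by case: (thetas n) ne => // ? ? _; rewrite /= mem_last.
have [p [Pp [ph [pl plen]]]] := HD n _ Hnc _ _ hx lx.
exists (proj m p); split; [|split; [|split]].
- exact: proj_path Pp.
- by rewrite head_proj ph -head_proj Hproj.
- by rewrite last_proj pl -last_proj Hproj.
- exact: leq_trans (len_proj _ _) plen.
Qed.

End G.

Theorem lemma5p3 (S T : finType) (E : rel S) (tp : S -> S -> T) (I : T -> rel S)
  (hIGS : is_IGS E tp I) (hGR1 : GR1 I) (hGR2 : GR2 E tp I) (hGR3 : GR3 I) :
  [/\ (forall m theta, 0 < m -> is_path E tp I m theta ->
         size (undup theta) <= 2 -> intersection_path E tp I m theta),
      (forall m theta, non_collapsing E tp I m theta ->
         intersection_path E tp I m theta),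
      (forall m theta thetas, 0 < m -> is_path E tp I m theta ->
         intersection_witness E tp I m theta thetas ->
         exists N, forall n, N <= n -> non_collapsing E tp I n (thetas n))
    & (bounded_geometry E tp I <->
       exists D, forall n theta, non_collapsing E tp I n theta ->
         forall x y, x \in theta -> y \in theta -> dist_le E tp I n x y D)].
Proof.
case: hIGS => [[d _] antis _ _ Inon].
split.
- move=> m theta m0 Hp Hu; exact: (two_ip antis Inon d m0 Hp Hu).
- move=> m theta; exact: (nc_ip antis d).
- move=> m theta thetas _ _ Hw; exact: (witness_nc Hw).
- split.
  + case=> D HD; exists D => n theta Hnc x y xt yt.
    have Hnc0 := Hnc; case/and3P: Hnc0 => n1 /and3P[ne al _] _.
    have hsz : size (head [::] theta) = n.
      by case: (theta) ne al => // a s _ /andP[/eqP].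
    rewrite -hsz; apply: HD; first by rewrite hsz ltnW.
      exact: (prefix_nbhd antis d Hnc xt).
    exact: (prefix_nbhd antis d Hnc yt).
  + case=> D HD; exists (D + D) => w w0 v1 v2 h1 h2.
    exact: dist_join (fn_dist HD w0 h1) (fn_dist HD w0 h2).
Qed.
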